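(* Let $L>0$, $\delta\in\mathbb{R}$ and $k\in\mathbb{Z}\setminus\{0\}$. For $j=1,2$ let $u^{in}_j\in H^2_{\mathrm{per}}$ have spatial mean zero and satisfy $u^{in}_j(x+\tfrac{L}{k})=u^{in}_j(x)$ for a.e. $x\in\mathbb{R}$, and assume $\|u^{in}_1\|_{L^2}\neq\|u^{in}_2\|_{L^2}$. Let $u_j(x,t)$ be the solution, with $L$-periodic boundary conditions, of the Korteweg–de Vries equation $$u_t+uu_x+\delta^2u_{xxx}=0,\qquad u(x,0)=u^{in}_j(x).$$ Then: (i) $u_j(x+\tfrac{L}{k},t)=u_j(x,t)$ for a.e. $x\in\mathbb{R}$, for $j=1,2$ and all $t\in\mathbb{R}$; (ii) $P_Mu_1(\cdot,t)=P_Mu_2(\cdot,t)$ for every positive integer $M<|k|$ and every $t\in\mathbb{R}$; (iii) $\limsup_{t\to\infty}\|u_1(\cdot,t)-u_2(\cdot,t)\|_{L^2}>0$.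
   Context: $H^2_{\mathrm{per}}$ denotes the closure of the $L$-periodic trigonometric polynomials on $\mathbb{R}$ in the norm $\big(\sum_{j=0}^2\int_0^L|\partial_x^jf|^2dx\big)^{1/2}$; $L^2$ norms are over one period $[0,L]$. For a positive integer $M$, $P_M$ is the orthogonal projection onto the lowest $M$ Fourier modes, i.e. onto the span of $e^{i\frac{2\pi}{L}nx}$ with $|n|\le M$. The KdV equation is understood to be globally well-posed with unique solutions for such data. *)

(* Defs.v *)
(* L-periodic functions are represented by their
   Fourier coefficients  f = sum_{n in Z} fhat n * exp(2 pi i n x / L). *)
From Stdlib Require Import Reals ZArith.
From Coquelicot Require Import Coquelicot.
Open Scope R_scope.

Definition kappa (L : R) : R := 2 * PI / L.

Definition cis (th : R) : C := (cos th, sin th).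

Definition zfold {G : AbelianMonoid} (f : Z -> G) (j : nat) : G :=
  match j with
  | O => f 0%Z
  | S _ => plus (f (Z.of_nat j)) (f (- Z.of_nat j)%Z)
  end.

(* sum over Z (symmetric partial sums) *)
Definition is_zsum (f : Z -> C) (l : C) : Prop := is_series (zfold f) l.

(* real-valued function: conjugate-symmetric coefficients *)
Definition real_coeffs (f : Z -> C) : Prop :=
  forall n : Z, f (- n)%Z = Cconj (f n).

(* H^2 weight sum_{j=0}^2 (kappa n)^(2j), matching the norm
   (sum_{j<=2} int_0^L |d^j f|^2)^(1/2) of the paper *)
Definition h2_weight (L : R) (n : Z) : R :=
  1 + (kappa L * IZR n) ^ 2 + (kappa L * IZR n) ^ 4.

(* squared H^2_per norm:  sum_{j<=2} int_0^L |d^j f|^2 = L sum_n w(n) |fhat n|^2 *)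
Definition h2_terms (L : R) (f : Z -> C) : nat -> R :=
  zfold (fun n => h2_weight L n * (Cmod (f n)) ^ 2).

Definition in_H2per (L : R) (f : Z -> C) : Prop :=
  ex_series (h2_terms L f) /\ real_coeffs f.

Definition H2_norm_sq (L : R) (f : Z -> C) : R := L * Series (h2_terms L f).

(* L^2 norm over one period:  ||f||^2 = L sum_n |fhat n|^2 *)
Definition L2_norm (L : R) (f : Z -> C) : R :=
  sqrt (L * Series (zfold (fun n => (Cmod (f n)) ^ 2))).

Definition csub (f g : Z -> C) : Z -> C := fun n => Cminus (f n) (g n).

(* translation x |-> f (x + a) *)
Definition translate (L a : R) (f : Z -> C) : Z -> C :=
  fun n => Cmult (cis (kappa L * IZR n * a)) (f n).

Definition PM (M : nat) (f : Z -> C) : Z -> C :=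
  fun n => if (Z.abs n <=? Z.of_nat M)%Z then f n else RtoC 0.

(* Solution of
     u_t + u u_x + delta^2 u_xxx = 0 on R_t x (R / L Z)
   in the class C(R; H^2_per), taken in the distributional sense; for such u
   this is equivalent to every Fourier mode being differentiable with
     d/dt uhat_n = - (i kappa n / 2) (u^2)^_n + i delta^2 (kappa n)^3 uhat_n,
   where (u^2)^_n = sum_m uhat_m uhat_{n-m}. *)
Definition kdv_solution (L delta : R) (uin : Z -> C) (u : R -> Z -> C) : Prop :=
  (forall t, in_H2per L (u t)) /\
  (forall t eps, 0 < eps -> exists d, 0 < d /\
      forall s, Rabs (s - t) < d -> H2_norm_sq L (csub (u s) (u t)) < eps) /\
  u 0 = uin /\
  exists c : R -> Z -> C,
    (forall t n, is_zsum (fun m => Cmult (u t m) (u t (n - m)%Z)) (c t n)) /\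
    (forall t n,
       is_derive (fun s => u s n) t
         (Cplus (Cmult (0, - (kappa L * IZR n) / 2) (c t n))
                (Cmult (0, delta ^ 2 * (kappa L * IZR n) ^ 3) (u t n)))).

(* standing assumption of the paper: unique solutions (global well-posedness) *)
Definition kdv_unique (L delta : R) : Prop :=
  forall uin v w, kdv_solution L delta uin v -> kdv_solution L delta uin w -> v = w.

(* Main.v *)
Require Import Defs.
From Stdlib Require Import Reals ZArith Lra Lia Psatz FunctionalExtensionality.
From Coquelicot Require Import Coquelicot.
Open Scope R_scope.

Lemma Ceq (a b : C) : fst a = fst b -> snd a = snd b -> a = b.
Proof. destruct a, b; simpl; intros -> ->; reflexivity. Qed.

Lemma Cmod_sq (z : C) : Cmod z ^ 2 = fst z ^ 2 + snd z ^ 2.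
Proof. unfold Cmod. rewrite pow2_sqrt; [reflexivity| nra]. Qed.

Fixpoint zsC (n : nat) (f : Z -> C) : C :=
  match n with
  | O => f 0%Z
  | S r => Cplus (zsC r f) (Cplus (f (Z.of_nat (S r))) (f (- Z.of_nat (S r))%Z))
  end.
Fixpoint zsR (n : nat) (f : Z -> R) : R :=
  match n with
  | O => f 0%Z
  | S r => zsR r f + (f (Z.of_nat (S r)) + f (- Z.of_nat (S r))%Z)
  end.

Lemma zsR_S n f : zsR (S n) f = zsR n f + (f (Z.of_nat (S n)) + f (- Z.of_nat (S n))%Z).
Proof. reflexivity. Qed.
Lemma zsC_S n f : zsC (S n) f = Cplus (zsC n f) (Cplus (f (Z.of_nat (S n))) (f (- Z.of_nat (S n))%Z)).
Proof. reflexivity. Qed.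
Lemma zsR_O f : zsR O f = f 0%Z. Proof. reflexivity. Qed.
Lemma zsC_O f : zsC O f = f 0%Z. Proof. reflexivity. Qed.

Lemma zsum_lim (f : Z -> C) l : is_zsum f l ->
  filterlim (fun n => zsC n f) eventually (locally l).
Proof.
  unfold is_zsum, is_series. apply filterlim_ext. intro n.
  induction n. apply sum_O. rewrite sum_Sn, IHn. reflexivity.
Qed.

Lemma sum_zfold_R (g : Z -> R) n : sum_n (zfold g) n = zsR n g.
Proof. induction n. apply sum_O. rewrite sum_Sn, IHn. reflexivity. Qed.

Lemma zsR_ext n (f g : Z -> R) :
  (forall a, (Z.abs a <= Z.of_nat n)%Z -> f a = g a) -> zsR n f = zsR n g.
Proof.
  induction n; intro H; rewrite ?zsR_S, ?zsR_O, ?zsC_S, ?zsC_O.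
  - apply H; lia.
  - rewrite IHn by (intros; apply H; lia).
    rewrite (H (Z.of_nat (S n))) by lia. rewrite (H (- Z.of_nat (S n))%Z) by lia.
    reflexivity.
Qed.

Lemma zsR_plus n f g : zsR n (fun a => f a + g a) = zsR n f + zsR n g.
Proof. induction n; rewrite ?zsR_S, ?zsR_O, ?zsC_S, ?zsC_O; [|rewrite IHn]; simpl; ring. Qed.

Lemma zsR_minus n f g : zsR n (fun a => f a - g a) = zsR n f - zsR n g.
Proof. induction n; rewrite ?zsR_S, ?zsR_O; [|rewrite IHn]; ring. Qed.

Lemma zsR_scal n k f : zsR n (fun a => k * f a) = k * zsR n f.
Proof. induction n; rewrite ?zsR_S, ?zsR_O, ?zsC_S, ?zsC_O; [|rewrite IHn]; simpl; ring. Qed.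

Lemma zsR_le n (f g : Z -> R) :
  (forall a, (Z.abs a <= Z.of_nat n)%Z -> f a <= g a) -> zsR n f <= zsR n g.
Proof.
  induction n; intro H; rewrite ?zsR_S, ?zsR_O, ?zsC_S, ?zsC_O.
  - apply H; lia.
  - assert (H1 := H (Z.of_nat (S n))). assert (H2 := H (- Z.of_nat (S n))%Z).
    assert (zsR n f <= zsR n g) by (apply IHn; intros; apply H; lia).
    assert (f (Z.of_nat (S n)) <= g (Z.of_nat (S n))) by (apply H1; lia).
    assert (f (- Z.of_nat (S n))%Z <= g (- Z.of_nat (S n))%Z) by (apply H2; lia).
    lra.
Qed.

Lemma zsR_nonneg n (f : Z -> R) :
  (forall a, 0 <= f a) -> 0 <= zsR n f.
Proof.
  induction n; intro H; rewrite ?zsR_S, ?zsR_O. apply H.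
  specialize (IHn H). pose proof (H (Z.of_nat (S n))). pose proof (H (- Z.of_nat (S n))%Z). lra.
Qed.

Lemma zsR_term n (f : Z -> R) a :
  (forall a, 0 <= f a) -> (Z.abs a <= Z.of_nat n)%Z -> f a <= zsR n f.
Proof.
  induction n; intros H Ha; rewrite ?zsR_S, ?zsR_O, ?zsC_S, ?zsC_O.
  - replace a with 0%Z by lia. lra.
  - pose proof (zsR_nonneg n f H).
    pose proof (H (Z.of_nat (S n))). pose proof (H (- Z.of_nat (S n))%Z).
    destruct (Z.eq_dec a (Z.of_nat (S n))) as [->|Hn1]. lra.
    destruct (Z.eq_dec a (- Z.of_nat (S n))%Z) as [->|Hn2]. lra.
    assert (f a <= zsR n f) by (apply IHn; auto; lia). lra.
Qed.

Lemma zsR_mono n m (f : Z -> R) :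
  (forall a, 0 <= f a) -> (n <= m)%nat -> zsR n f <= zsR m f.
Proof.
  intros H Hnm. induction Hnm. lra. rewrite zsR_S.
  pose proof (H (Z.of_nat (S m))). pose proof (H (- Z.of_nat (S m))%Z). lra.
Qed.

Lemma zsR_abs n f : Rabs (zsR n f) <= zsR n (fun a => Rabs (f a)).
Proof.
  induction n; rewrite ?zsR_S, ?zsR_O, ?zsC_S, ?zsC_O. lra.
  eapply Rle_trans. apply Rabs_triang. eapply Rle_trans. apply Rplus_le_compat_l, Rabs_triang. lra.
Qed.

Lemma zsC_ext n (f g : Z -> C) :
  (forall a, (Z.abs a <= Z.of_nat n)%Z -> f a = g a) -> zsC n f = zsC n g.
Proof.
  induction n; intro H; rewrite ?zsR_S, ?zsR_O, ?zsC_S, ?zsC_O.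
  - apply H; lia.
  - rewrite IHn by (intros; apply H; lia).
    rewrite (H (Z.of_nat (S n))) by lia. rewrite (H (- Z.of_nat (S n))%Z) by lia.
    reflexivity.
Qed.

Lemma zsC_fst n f : fst (zsC n f) = zsR n (fun a => fst (f a)).
Proof. induction n; rewrite ?zsR_S, ?zsR_O, ?zsC_S, ?zsC_O; [reflexivity|]. simpl fst at 1. rewrite IHn. reflexivity. Qed.
Lemma zsC_snd n f : snd (zsC n f) = zsR n (fun a => snd (f a)).
Proof. induction n; rewrite ?zsR_S, ?zsR_O, ?zsC_S, ?zsC_O; [reflexivity|]. simpl snd at 1. rewrite IHn. reflexivity. Qed.

Lemma zsC_plus n f g : zsC n (fun a => Cplus (f a) (g a)) = Cplus (zsC n f) (zsC n g).
Proof. apply Ceq; rewrite ?zsC_fst, ?zsC_snd; simpl; rewrite ?zsC_fst, ?zsC_snd; apply zsR_plus. Qed.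

Lemma zsC_scal n k f : zsC n (fun a => Cmult k (f a)) = Cmult k (zsC n f).
Proof.
  apply Ceq; rewrite ?zsC_fst, ?zsC_snd; simpl; rewrite ?zsC_fst, ?zsC_snd;
  rewrite <- !zsR_scal; rewrite <- ?zsR_minus, <- ?zsR_plus; apply zsR_ext; intros; ring.
Qed.

Lemma zsC_Cmod n f : Cmod (zsC n f) <= zsR n (fun a => Cmod (f a)).
Proof.
  induction n; rewrite ?zsR_S, ?zsR_O, ?zsC_S, ?zsC_O. lra.
  eapply Rle_trans. apply Cmod_triangle. eapply Rle_trans. apply Rplus_le_compat_l, Cmod_triangle. lra.
Qed.

Lemma zsC_refl n f : zsC n (fun a => f (- a)%Z) = zsC n f.
Proof.
  induction n; rewrite ?zsR_S, ?zsR_O, ?zsC_S, ?zsC_O. reflexivity. rewrite IHn. rewrite Z.opp_involutive.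
  apply Ceq; simpl; ring.
Qed.

Lemma zsC_support n m (f : Z -> C) :
  (forall a, (Z.of_nat m < Z.abs a)%Z -> f a = RtoC 0) -> (m <= n)%nat -> zsC n f = zsC m f.
Proof.
  intros H Hmn. induction Hmn as [|n Hmn IH]. reflexivity. rewrite zsC_S, IH.
  rewrite (H (Z.of_nat (S n))) by lia. rewrite (H (- Z.of_nat (S n))%Z) by lia.
  apply Ceq; simpl; ring.
Qed.

Lemma zsC_shift1 n f :
  zsC n (fun a => f (a - 1)%Z) = Cplus (Cminus (zsC n f) (f (Z.of_nat n))) (f (- Z.of_nat n - 1)%Z).
Proof.
  induction n; rewrite ?zsR_S, ?zsR_O, ?zsC_S, ?zsC_O.
  - apply Ceq; simpl; ring.
  - rewrite IHn.
    replace (Z.of_nat (S n) - 1)%Z with (Z.of_nat n) by lia.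
    replace (- Z.of_nat (S n) - 1)%Z with (- Z.of_nat (S (S n)))%Z by lia.
    replace (- Z.of_nat n - 1)%Z with (- Z.of_nat (S n))%Z by lia.
    replace (Z.pos (Pos.of_succ_nat n)) with (Z.of_nat (S n)) by reflexivity.
    apply Ceq; simpl; ring.
Qed.

Lemma zsC_fubini n m (G : Z -> Z -> C) :
  zsC n (fun a => zsC m (fun b => G a b)) = zsC m (fun b => zsC n (fun a => G a b)).
Proof.
  induction n; rewrite ?zsR_S, ?zsR_O, ?zsC_S, ?zsC_O. reflexivity.
  rewrite IHn. rewrite <- !zsC_plus. reflexivity.
Qed.

Lemma zsC_zero n : zsC n (fun _ => RtoC 0) = RtoC 0.
Proof. induction n; rewrite ?zsR_S, ?zsR_O, ?zsC_S, ?zsC_O; [|rewrite IHn]; simpl; apply Ceq; simpl; ring. Qed.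

Lemma zsC_shift_pos R K (f : Z -> C) (j : nat) :
  (forall a, (Z.of_nat K < Z.abs a)%Z -> f a = RtoC 0) -> (j + K <= R)%nat ->
  zsC R (fun a => f (a - Z.of_nat j)%Z) = zsC R f.
Proof.
  intros Hs. induction j; intro Hj.
  - apply zsC_ext. intros. f_equal. lia.
  - rewrite <- IHj by lia.
    set (g := fun a => f (a - Z.of_nat j)%Z).
    transitivity (zsC R (fun a => g (a - 1)%Z)).
    { apply zsC_ext. intros. unfold g. f_equal. lia. }
    rewrite zsC_shift1. unfold g.
    rewrite (Hs (Z.of_nat R - Z.of_nat j)%Z) by lia.
    rewrite (Hs (- Z.of_nat R - 1 - Z.of_nat j)%Z) by lia.
    apply Ceq; simpl; ring.
Qed.

Lemma zsC_shift R K (f : Z -> C) (b : Z) :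
  (forall a, (Z.of_nat K < Z.abs a)%Z -> f a = RtoC 0) -> (Z.abs b + Z.of_nat K <= Z.of_nat R)%Z ->
  zsC R (fun a => f (a - b)%Z) = zsC R f.
Proof.
  intros Hs Hb. destruct (Z_le_gt_dec 0 b) as [Hb0|Hb0].
  - rewrite <- (Z2Nat.id b Hb0). apply zsC_shift_pos with K; auto. lia.
  - rewrite <- (zsC_refl R (fun a => f (a - b)%Z)).
    rewrite <- (zsC_refl R f).
    set (h := fun a => f (- a)%Z).
    transitivity (zsC R (fun a => h (a - Z.of_nat (Z.to_nat (- b)))%Z)).
    { apply zsC_ext. intros. unfold h. f_equal. rewrite Z2Nat.id by lia. lia. }
    apply zsC_shift_pos with K.
    + intros a Ha. unfold h. apply Hs. lia.
    + lia.
Qed.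

Definition Fcore (K : nat) (u : Z -> C) (a b : Z) : C :=
  if Z_le_gt_dec (Z.abs (a + b)) (Z.of_nat K) then Cmult (u a) (Cmult (u b) (u (- a - b)%Z)) else RtoC 0.

Lemma core_zero K u :
  zsC K (fun a => zsC K (fun b => Cmult (RtoC (IZR a)) (Fcore K u a b))) = RtoC 0.
Proof.
  set (S1 := zsC K (fun a => zsC K (fun b => Cmult (RtoC (IZR a)) (Fcore K u a b)))).
  assert (E2 : zsC K (fun a => zsC K (fun b => Cmult (RtoC (IZR b)) (Fcore K u a b))) = S1).
  { rewrite zsC_fubini. unfold S1. apply zsC_ext; intros a _. apply zsC_ext; intros b _.
    unfold Fcore. replace (b + a)%Z with (a + b)%Z by lia.
    replace (- b - a)%Z with (- a - b)%Z by lia.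
    destruct Z_le_gt_dec; [|reflexivity]. apply Ceq; simpl; ring. }
  assert (E3 : zsC K (fun a => zsC K (fun b => Cmult (RtoC (IZR (- a - b))) (Fcore K u a b))) = S1).
  { unfold S1. rewrite (zsC_fubini K K (fun a b => Cmult (RtoC (IZR (-a-b))) (Fcore K u a b))).
    rewrite (zsC_fubini K K (fun a b => Cmult (RtoC (IZR a)) (Fcore K u a b))).
    apply zsC_ext; intros b Hb.
    set (H := fun x => if Z_le_gt_dec (Z.abs x) (Z.of_nat K) then Cmult (RtoC (IZR x)) (Fcore K u x b) else RtoC 0).
    assert (HsH : forall a, (Z.of_nat K < Z.abs a)%Z -> H a = RtoC 0).
    { intros a Ha. unfold H. destruct Z_le_gt_dec; [lia|reflexivity]. }
    transitivity (zsC K (fun a => H (- a - b)%Z)).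
    { apply zsC_ext; intros a Ha. unfold H, Fcore.
      replace (- a - b + b)%Z with (- a)%Z by lia.
      replace (- (- a - b) - b)%Z with a by lia.
      destruct (Z_le_gt_dec (Z.abs (- a - b)) (Z.of_nat K));
      destruct (Z_le_gt_dec (Z.abs (a + b)) (Z.of_nat K));
      destruct (Z_le_gt_dec (Z.abs (- a)) (Z.of_nat K)); try lia;
      apply Ceq; simpl; ring. }
    transitivity (zsC K H).
    2:{ apply zsC_ext; intros a Ha. unfold H. destruct Z_le_gt_dec; [reflexivity|lia]. }
    transitivity (zsC K (fun a => H (a - b)%Z)).
    { rewrite <- (zsC_refl K (fun a => H (a - b)%Z)). apply zsC_ext; intros a _. cbv beta. f_equal; lia. }
    rewrite <- (zsC_support (2 * K) K (fun a => H (a - b)%Z)).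
    2:{ intros a Ha. unfold H, Fcore. destruct Z_le_gt_dec; [|reflexivity].
        replace (a - b + b)%Z with a by lia. destruct Z_le_gt_dec; [lia|]. apply Ceq; simpl; ring. }
    2: lia.
    rewrite (zsC_shift (2 * K) K H b HsH) by lia.
    apply zsC_support; auto. lia. }
  assert (E : Cplus (Cplus S1 S1) S1 = RtoC 0).
  { rewrite <- E2 at 2. rewrite <- E3 at 2. unfold S1. rewrite <- !zsC_plus.
    rewrite <- zsC_zero with K. apply zsC_ext; intros a _.
    rewrite <- !zsC_plus. rewrite <- zsC_zero with K. apply zsC_ext; intros b _.
    rewrite minus_IZR, opp_IZR. apply Ceq; simpl; ring. }
  pose proof (f_equal fst E) as E1. pose proof (f_equal snd E) as E1'. simpl in E1, E1'.
  apply Ceq; simpl; lra.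
Qed.

Lemma zsR_zero n : zsR n (fun _ => 0) = 0.
Proof. induction n; rewrite ?zsR_S, ?zsR_O; [|rewrite IHn]; ring. Qed.

Definition q (m : Z) : R := if Z.eq_dec m 0 then 1 else / (IZR m) ^ 2.


Lemma q_nat n : q (Z.of_nat (S n)) = / (INR n + 1) ^ 2 /\ q (- Z.of_nat (S n))%Z = / (INR n + 1) ^ 2.
Proof.
  unfold q. split; destruct Z.eq_dec as [e|_]; try lia;
  rewrite ?opp_IZR, <- INR_IZR_INZ, S_INR; f_equal; ring.
Qed.

Lemma step_ineq x : 1 <= x -> 2 / (x + 1) ^ 2 <= 2 / x - 2 / (x + 1).
Proof.
  intro Hx. assert (0 < x + 1) by lra.
  assert (E : 2 / x - 2 / (x + 1) = 2 / (x * (x + 1))) by (field; lra).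
  rewrite E. unfold Rdiv. apply Rmult_le_compat_l. lra.
  apply Rinv_le_contravar. nra. nra.
Qed.

Lemma q_sum J : zsR J q <= 5.
Proof.
  assert (H : forall J, zsR (S J) q <= 5 - 2 / INR (S J)).
  { induction J0.
    - rewrite zsR_S, zsR_O. destruct (q_nat 0) as [-> ->]. simpl. unfold q. destruct Z.eq_dec; [|lia].
      simpl. lra.
    - rewrite zsR_S. destruct (q_nat (S J0)) as [-> ->].
      pose proof (step_ineq (INR (S J0))) as St.
      assert (1 <= INR (S J0)) by (rewrite S_INR; pose proof (pos_INR J0); lra).
      specialize (St H). rewrite (S_INR (S J0)). lra. }
  destruct J. rewrite zsR_O. unfold q. destruct Z.eq_dec; [lra|lia].
  specialize (H J). assert (0 < INR (S J)) by (apply lt_0_INR; lia).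
  assert (0 < 2 / INR (S J)) by (apply Rdiv_lt_0_compat; lra). lra.
Qed.

Definition qtail (K : nat) (m : Z) : R := if Z_lt_dec (Z.of_nat K) (Z.abs m) then q m else 0.

Lemma qtail_sum K J : (1 <= K)%nat -> zsR J (qtail K) <= 2 / INR K.
Proof.
  intro HK. assert (HK' : 1 <= INR K) by (apply (le_INR 1); lia).
  assert (H0 : forall J, (J <= K)%nat -> zsR J (qtail K) = 0).
  { intros J0 HJ. rewrite <- (zsR_zero J0). apply zsR_ext. intros a Ha. unfold qtail.
    destruct Z_lt_dec; [lia|reflexivity]. }
  assert (H1 : forall d, zsR (K + d) (qtail K) <= 2 / INR K - 2 / INR (K + d)).
  { induction d.
    - rewrite Nat.add_0_r, H0 by lia. lra.
    - rewrite Nat.add_succ_r, zsR_S.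
      assert (E1 : qtail K (Z.of_nat (S (K + d))) = q (Z.of_nat (S (K + d)))) by
        (unfold qtail; destruct Z_lt_dec; [reflexivity|lia]).
      assert (E2 : qtail K (- Z.of_nat (S (K + d)))%Z = q (- Z.of_nat (S (K + d)))%Z) by
        (unfold qtail; destruct Z_lt_dec; [reflexivity|lia]).
      rewrite E1, E2.
      destruct (q_nat (K + d)) as [-> ->].
      assert (1 <= INR (K + d)) by (apply (le_INR 1); lia).
      pose proof (step_ineq (INR (K + d)) H). rewrite S_INR. lra. }
  assert (0 < 2 / INR K) by (apply Rdiv_lt_0_compat; lra).
  destruct (le_lt_dec J K). rewrite H0 by auto. lra.
  replace J with (K + (J - K))%nat by lia. specialize (H1 (J - K)%nat).
  assert (0 < 2 / INR (K + (J - K))). { apply Rdiv_lt_0_compat. lra. apply lt_0_INR. lia. }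
  lra.
Qed.

Lemma kappa_pos L : 0 < L -> 0 < kappa L.
Proof. intro. unfold kappa. apply Rdiv_lt_0_compat; [pose proof PI_RGT_0|]; lra. Qed.

Definition Hb (L : R) (f : Z -> C) (b : R) : Prop :=
  0 <= b /\ forall J, zsR J (fun n => h2_weight L n * Cmod (f n) ^ 2) <= b ^ 2.

Definition Ak (L : R) : R := 1 + / (kappa L) ^ 2.

Lemma h2w_ge L n : 1 <= h2_weight L n /\ (kappa L * IZR n) ^ 4 <= h2_weight L n.
Proof. unfold h2_weight. split; nra. Qed.

Lemma Hb_term L f b n : Hb L f b -> h2_weight L n * Cmod (f n) ^ 2 <= b ^ 2.
Proof.
  intros [Hb0 H]. eapply Rle_trans; [|apply (H (Z.to_nat (Z.abs n)))].
  apply (zsR_term _ (fun n => h2_weight L n * Cmod (f n) ^ 2)). intro a. pose proof (h2w_ge L a). apply Rmult_le_pos; [lra| apply pow2_ge_0]. lia.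
Qed.

Lemma Hb_E1 L f b n : Hb L f b -> Cmod (f n) <= b.
Proof.
  intro H. pose proof (Hb_term L f b n H). destruct H as [Hb0 _].
  pose proof (h2w_ge L n). pose proof (Cmod_ge_0 (f n)).
  assert (Cmod (f n) ^ 2 <= b ^ 2) by nra. nra.
Qed.

Lemma Hb_E2 L f b n : 0 < L -> Hb L f b -> Cmod (f n) <= b * Ak L * q n.
Proof.
  intros HL H. pose proof (kappa_pos L HL) as Hk.
  assert (HA : 1 <= Ak L). { unfold Ak. assert (0 < / kappa L ^ 2) by (apply Rinv_0_lt_compat; nra). lra. }
  pose proof (Hb_E1 L f b n H) as E1. pose proof (Hb_term L f b n H) as T. destruct H as [Hb0 _].
  unfold q. destruct Z.eq_dec as [->|Hn].
  - nra.
  - pose proof (h2w_ge L n) as [_ W]. pose proof (Cmod_ge_0 (f n)) as C0.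
    assert (Hn' : IZR n <> 0) by (apply not_0_IZR; auto).
    assert (Hn2 : 0 < IZR n ^ 2) by (apply pow2_gt_0; auto).
    set (y := (kappa L * IZR n) ^ 2 * Cmod (f n)).
    assert (Hy : 0 <= y) by (unfold y; apply Rmult_le_pos; [apply pow2_ge_0|auto]).
    assert (y ^ 2 <= b ^ 2).
    { unfold y. replace (((kappa L * IZR n) ^ 2 * Cmod (f n)) ^ 2) with ((kappa L * IZR n) ^ 4 * Cmod (f n) ^ 2) by ring.
      eapply Rle_trans; [|apply T]. apply Rmult_le_compat_r; [apply pow2_ge_0|auto]. }
    assert (Hyb : y <= b) by nra.
    assert (Ek : 0 < (kappa L * IZR n) ^ 2) by (apply pow2_gt_0; apply Rmult_integral_contrapositive; split; lra).
    assert (Cmod (f n) <= b / (kappa L * IZR n) ^ 2).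
    { apply (Rmult_le_reg_l ((kappa L * IZR n) ^ 2)); auto. unfold Rdiv.
      rewrite <- Rmult_assoc, (Rmult_comm _ b), Rmult_assoc, Rinv_r by lra. unfold y in Hyb. lra. }
    eapply Rle_trans; [apply H0|].
    replace (b / (kappa L * IZR n) ^ 2) with (b * / kappa L ^ 2 * / IZR n ^ 2)
      by (field; split; lra).
    apply Rmult_le_compat_r. left; apply Rinv_0_lt_compat; auto.
    apply Rmult_le_compat_l; auto. unfold Ak; lra.
Qed.

Lemma E3_term L F n : 0 < L -> 0 <= F ->
  Rabs (IZR n) * F <= (h2_weight L n * F ^ 2 / kappa L ^ 4 + q n) / 2.
Proof.
  intros HL HF. pose proof (kappa_pos L HL) as Hk.
  pose proof (h2w_ge L n) as [W1 W].
  assert (Hk4 : 0 < kappa L ^ 4) by (apply pow_lt; auto).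
  assert (A1 : IZR n ^ 4 * F ^ 2 <= h2_weight L n * F ^ 2 / kappa L ^ 4).
  { unfold Rdiv. apply (Rmult_le_reg_l (kappa L ^ 4)); auto.
    replace (kappa L ^ 4 * (h2_weight L n * F ^ 2 * / kappa L ^ 4)) with (h2_weight L n * F ^ 2) by (field; lra).
    replace (kappa L ^ 4 * (IZR n ^ 4 * F ^ 2)) with ((kappa L * IZR n) ^ 4 * F ^ 2) by ring.
    apply Rmult_le_compat_r; [apply pow2_ge_0|auto]. }
  unfold q. destruct Z.eq_dec as [->|Hn].
  - rewrite Rabs_R0. assert (0 <= h2_weight L 0 * F ^ 2 / kappa L ^ 4).
    { unfold Rdiv. apply Rmult_le_pos. apply Rmult_le_pos; [lra|apply pow2_ge_0]. left; apply Rinv_0_lt_compat; auto. }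
    lra.
  - assert (Hn' : IZR n <> 0) by (apply not_0_IZR; auto).
    set (t := Rabs (IZR n)).
    assert (Ht : 0 < t) by (apply Rabs_pos_lt; auto).
    assert (Ht2 : IZR n ^ 2 = t ^ 2) by (unfold t; rewrite <- (pow2_abs (IZR n)); reflexivity).
    assert (Ht4 : IZR n ^ 4 = t ^ 4) by (replace 4%nat with (2 * 2)%nat by reflexivity; rewrite !pow_mult, Ht2; reflexivity).
    rewrite Ht4 in A1. rewrite Ht2.
    assert (Id : t ^ 4 * F ^ 2 + / t ^ 2 - 2 * (t * F) = (t ^ 2 * F - / t) ^ 2) by (field; lra).
    pose proof (pow2_ge_0 (t ^ 2 * F - / t)). lra.
Qed.

Lemma Hb_E3 L f b K : 0 < L -> Hb L f b ->
  zsR K (fun n => Rabs (IZR n) * Cmod (f n)) <= (b ^ 2 / kappa L ^ 4 + 5) / 2.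
Proof.
  intros HL H. pose proof (kappa_pos L HL) as Hk.
  assert (Hk4 : 0 < kappa L ^ 4) by (apply pow_lt; auto).
  eapply Rle_trans. apply zsR_le. intros a _. apply (E3_term L (Cmod (f a)) a HL (Cmod_ge_0 _)).
  assert (E : zsR K (fun a => (h2_weight L a * Cmod (f a) ^ 2 / kappa L ^ 4 + q a) / 2) =
     / 2 * (/ kappa L ^ 4 * zsR K (fun a => h2_weight L a * Cmod (f a) ^ 2) + zsR K q)).
  { rewrite <- (zsR_scal K (/ kappa L ^ 4)), <- zsR_plus, <- (zsR_scal K (/2)).
    apply zsR_ext; intros; unfold Rdiv; ring. }
  rewrite E. unfold Rdiv.
  pose proof (q_sum K). destruct H as [Hb0 H]. specialize (H K).
  assert (zsR K (fun a => h2_weight L a * Cmod (f a) ^ 2) * / kappa L ^ 4 <= b ^ 2 * / kappa L ^ 4).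
  { apply Rmult_le_compat_r; auto. left; apply Rinv_0_lt_compat; auto. }
  lra.
Qed.

Lemma q_nonneg m : 0 <= q m.
Proof. unfold q. destruct Z.eq_dec. lra. left. apply Rinv_0_lt_compat, pow2_gt_0, not_0_IZR; auto. Qed.

Lemma qtail_nonneg K m : 0 <= qtail K m.
Proof. unfold qtail. destruct Z_lt_dec. apply q_nonneg. lra. Qed.

Lemma q_big K x : (1 <= K)%nat -> (Z.of_nat K < Z.abs x)%Z -> q x <= / INR K ^ 2.
Proof.
  intros HK Hx. unfold q. destruct Z.eq_dec. lia.
  assert (HK' : 1 <= INR K) by (apply (le_INR 1); lia).
  apply Rinv_le_contravar. apply pow2_gt_0; lra.
  rewrite <- (pow2_abs (IZR x)), <- abs_IZR.
  assert (IZR (Z.of_nat K) <= IZR (Z.abs x)) by (apply IZR_le; lia).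
  rewrite <- INR_IZR_INZ in *. apply pow_incr. lra.
Qed.

Definition coreb (K : nat) (n m : Z) : bool :=
  andb (Z.abs m <=? Z.of_nat K)%Z (Z.abs (n - m) <=? Z.of_nat K)%Z.

Definition rest (u : Z -> C) (K J : nat) (n : Z) : R :=
  zsR J (fun m => if coreb K n m then 0 else Cmod (u m) * Cmod (u (n - m)%Z)).

Lemma rest_bound L u b K J n : 0 < L -> Hb L u b -> (1 <= K)%nat ->
  rest u K J n <= b ^ 2 * Ak L * (2 / INR K) + b ^ 2 * Ak L ^ 2 / INR K ^ 2 * 5.
Proof.
  intros HL H HK.
  assert (HA : 1 <= Ak L). { pose proof (kappa_pos L HL). unfold Ak. assert (0 < / kappa L ^ 2) by (apply Rinv_0_lt_compat; nra). lra. }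
  assert (HK' : 1 <= INR K) by (apply (le_INR 1); lia).
  pose proof H as [Hb0 _].
  assert (Hc : 0 <= b ^ 2 * Ak L ^ 2 / INR K ^ 2).
  { unfold Rdiv. apply Rmult_le_pos. apply Rmult_le_pos; apply pow2_ge_0. left; apply Rinv_0_lt_compat, pow2_gt_0; lra. }
  unfold rest. eapply Rle_trans.
  - apply (zsR_le J _ (fun m => b ^ 2 * Ak L * qtail K m + b ^ 2 * Ak L ^ 2 / INR K ^ 2 * q m)).
    intros m _.
    pose proof (Hb_E2 L u b m HL H) as Em. pose proof (Hb_E2 L u b (n - m) HL H) as Enm.
    pose proof (Hb_E1 L u b (n - m) H) as E1nm.
    pose proof (Cmod_ge_0 (u m)). pose proof (Cmod_ge_0 (u (n - m)%Z)).
    pose proof (q_nonneg m). pose proof (qtail_nonneg K m).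
    assert (0 <= b ^ 2 * Ak L * qtail K m) by (apply Rmult_le_pos; [apply Rmult_le_pos; [apply pow2_ge_0|lra]|auto]).
    assert (0 <= b ^ 2 * Ak L ^ 2 / INR K ^ 2 * q m) by (apply Rmult_le_pos; auto).
    unfold coreb. destruct (Z.leb_spec (Z.abs m) (Z.of_nat K)); destruct (Z.leb_spec (Z.abs (n - m)) (Z.of_nat K)); cbv [andb].
    + lra.
    +
      pose proof (q_big K (n - m) HK H7).
      assert (Cmod (u (n - m)%Z) <= b * Ak L / INR K ^ 2).
      { eapply Rle_trans; [apply Enm|]. unfold Rdiv. apply Rmult_le_compat_l; auto. apply Rmult_le_pos; lra. }
      assert (Cmod (u m) * Cmod (u (n - m)%Z) <= (b * Ak L * q m) * (b * Ak L / INR K ^ 2)).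
      { apply Rmult_le_compat; auto. }
      assert ((b * Ak L * q m) * (b * Ak L / INR K ^ 2) = b ^ 2 * Ak L ^ 2 / INR K ^ 2 * q m) by (field; lra).
      lra.
    + assert (qtail K m = q m) by (unfold qtail; destruct Z_lt_dec; [reflexivity|lia]).
      assert (Cmod (u m) * Cmod (u (n - m)%Z) <= (b * Ak L * q m) * b) by (apply Rmult_le_compat; auto).
      nra.
    + assert (qtail K m = q m) by (unfold qtail; destruct Z_lt_dec; [reflexivity|lia]).
      assert (Cmod (u m) * Cmod (u (n - m)%Z) <= (b * Ak L * q m) * b) by (apply Rmult_le_compat; auto).
      nra.
  - rewrite zsR_plus, !zsR_scal. pose proof (qtail_sum K J HK). pose proof (q_sum J).
    assert (0 <= b ^ 2 * Ak L) by (apply Rmult_le_pos; [apply pow2_ge_0|lra]).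
    apply Rplus_le_compat; apply Rmult_le_compat_l; auto.
Qed.

Definition Tsum (u : Z -> C) (K J : nat) : C :=
  zsC K (fun n => Cmult (RtoC (IZR n)) (Cmult (u (- n)%Z) (zsC J (fun m => Cmult (u m) (u (n - m)%Z))))).

Lemma T_bound u K J : (K <= J)%nat ->
  Cmod (Tsum u K J) <= zsR K (fun n => Rabs (IZR n) * Cmod (u (- n)%Z) * rest u K J n).
Proof.
  intro HKJ.
  set (g1 := fun n m => if coreb K n m then Cmult (u m) (u (n - m)%Z) else RtoC 0).
  set (g2 := fun n m => if coreb K n m then RtoC 0 else Cmult (u m) (u (n - m)%Z)).
  assert (Split : Tsum u K J =
     Cplus (zsC K (fun n => Cmult (RtoC (IZR n)) (Cmult (u (- n)%Z) (zsC J (g1 n)))))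
           (zsC K (fun n => Cmult (RtoC (IZR n)) (Cmult (u (- n)%Z) (zsC J (g2 n)))))).
  { unfold Tsum. rewrite <- zsC_plus. apply zsC_ext; intros n _.
    assert (E : zsC J (fun m => Cmult (u m) (u (n - m)%Z)) = Cplus (zsC J (g1 n)) (zsC J (g2 n))).
    { rewrite <- zsC_plus. apply zsC_ext; intros m _. unfold g1, g2.
      destruct coreb; apply Ceq; simpl; ring. }
    rewrite E. apply Ceq; simpl; ring. }
  assert (Zero : zsC K (fun n => Cmult (RtoC (IZR n)) (Cmult (u (- n)%Z) (zsC J (g1 n)))) = RtoC 0).
  { transitivity (zsC K (fun n => zsC K (fun m => Cmult (RtoC (IZR n)) (Cmult (u (- n)%Z) (g1 n m))))).
    { apply zsC_ext; intros n _. rewrite (zsC_support J K (g1 n)).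
      - rewrite <- zsC_scal. f_equal. rewrite <- zsC_scal. reflexivity.
      - intros m Hm. unfold g1, coreb. destruct (Z.leb_spec (Z.abs m) (Z.of_nat K)); [lia|reflexivity].
      - auto. }
    rewrite <- zsC_refl.
    transitivity (zsC K (fun a => zsC K (fun m => Cmult (RtoC (-1)) (Cmult (RtoC (IZR a)) (Fcore K u a m))))).
    { apply zsC_ext; intros a Ha. apply zsC_ext; intros m Hm. unfold g1, Fcore, coreb.
      rewrite Z.opp_involutive.
      replace (- a - m)%Z with (- a - m)%Z by reflexivity.
      destruct (Z.leb_spec (Z.abs m) (Z.of_nat K)); [|lia].
      destruct (Z.leb_spec (Z.abs (- a - m)) (Z.of_nat K));
      destruct (Z_le_gt_dec (Z.abs (a + m)) (Z.of_nat K)); try lia; cbv [andb];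
      rewrite ?opp_IZR; apply Ceq; simpl; ring. }
    transitivity (zsC K (fun a => Cmult (RtoC (-1)) (zsC K (fun m => Cmult (RtoC (IZR a)) (Fcore K u a m))))).
    { apply zsC_ext; intros. apply zsC_scal. }
    rewrite zsC_scal, core_zero. apply Ceq; simpl; ring. }
  rewrite Split, Zero.
  replace (Cplus (RtoC 0) _) with (zsC K (fun n => Cmult (RtoC (IZR n)) (Cmult (u (- n)%Z) (zsC J (g2 n)))))
    by (apply Ceq; simpl; ring).
  eapply Rle_trans. apply zsC_Cmod. apply zsR_le. intros n _.
  rewrite !Cmod_mult, Cmod_R. rewrite Rmult_assoc. apply Rmult_le_compat_l. apply Rabs_pos.
  apply Rmult_le_compat_l. apply Cmod_ge_0.
  eapply Rle_trans. apply zsC_Cmod. unfold rest. apply zsR_le. intros m _. unfold g2.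
  destruct coreb. rewrite Cmod_0. lra. rewrite Cmod_mult. lra.
Qed.

Lemma T_total L u b K J : 0 < L -> Hb L u b -> real_coeffs u -> (1 <= K)%nat -> (K <= J)%nat ->
  Cmod (Tsum u K J) <= ((b ^ 2 / kappa L ^ 4 + 5) / 2) *
     (b ^ 2 * Ak L * (2 / INR K) + b ^ 2 * Ak L ^ 2 / INR K ^ 2 * 5).
Proof.
  intros HL H Hr HK HKJ. eapply Rle_trans. apply T_bound; auto.
  set (Rb := b ^ 2 * Ak L * (2 / INR K) + b ^ 2 * Ak L ^ 2 / INR K ^ 2 * 5).
  assert (HRb : 0 <= Rb).
  { eapply Rle_trans; [|apply (rest_bound L u b K J 0%Z HL H HK)]. unfold rest. apply zsR_nonneg.
    intro m. destruct coreb. lra. apply Rmult_le_pos; apply Cmod_ge_0. }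
  eapply Rle_trans. apply (zsR_le K _ (fun n => Rb * (Rabs (IZR n) * Cmod (u n)))).
  - intros n _. rewrite Hr, Cmod_conj. rewrite (Rmult_comm Rb). apply Rmult_le_compat_l.
    apply Rmult_le_pos; [apply Rabs_pos|apply Cmod_ge_0]. apply rest_bound; auto.
  - rewrite zsR_scal. rewrite Rmult_comm. apply Rmult_le_compat_r; auto. apply Hb_E3; auto.
Qed.

Lemma zsC_lim K (a : nat -> Z -> C) (l : Z -> C) :
  (forall n, filterlim (fun J => a J n) eventually (locally (l n))) ->
  filterlim (fun J => zsC K (a J)) eventually (locally (zsC K l)).
Proof.
  intro H. induction K.
  - rewrite zsC_O. apply filterlim_ext with (fun J => a J 0%Z). intro; reflexivity. apply H.
  - rewrite zsC_S. apply filterlim_ext with (fun J => plus (zsC K (a J)) (plus (a J (Z.of_nat (S K))) (a J (- Z.of_nat (S K))%Z))).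
    { intro. rewrite zsC_S. reflexivity. }
    eapply filterlim_comp_2. apply IHK.
    eapply filterlim_comp_2. apply H. apply H. apply (filterlim_plus (V := C_NormedModule)).
    apply (filterlim_plus (V := C_NormedModule)).
Qed.

Lemma lim_cmult (k : C) (x : nat -> C) l :
  filterlim x eventually (locally l) -> filterlim (fun J => Cmult k (x J)) eventually (locally (Cmult k l)).
Proof. intro H. eapply filterlim_comp. apply H. apply (filterlim_scal_r (V := C_NormedModule) k l). Qed.

Lemma lim_Cmod_le (x : nat -> C) l M :
  filterlim x eventually (locally l) -> (exists N, forall J, (N <= J)%nat -> Cmod (x J) <= M) -> Cmod l <= M.
Proof.
  intros H [N HN].
  assert (H2 : filterlim (fun J => Cmod (x J)) eventually (locally (Cmod l))).
  { eapply filterlim_comp. apply H. apply (filterlim_norm (V := C_NormedModule) l). }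
  assert (Rbar_le (Cmod l) M).
  { apply (filterlim_le (F := eventually) (fun J => Cmod (x J)) (fun _ => M)).
    exists N. auto. exact H2. apply filterlim_const. }
  exact H0.
Qed.

Lemma is_derive_fstC (f : R -> C) t l : is_derive f t l -> is_derive (fun s => fst (f s)) t (fst l).
Proof.
  intro H. unfold is_derive in *.
  eapply filterdiff_ext_lin.
  apply (filterdiff_comp' f (fun p : prod_NormedModule R_AbsRing R_NormedModule R_NormedModule => fst p) t _ (fun p : prod_NormedModule R_AbsRing R_NormedModule R_NormedModule => fst p) H).
  apply filterdiff_linear. apply is_linear_fst.
  intro y. reflexivity.
Qed.

Lemma is_derive_sndC (f : R -> C) t l : is_derive f t l -> is_derive (fun s => snd (f s)) t (snd l).
Proof.
  intro H. unfold is_derive in *.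
  eapply filterdiff_ext_lin.
  apply (filterdiff_comp' f (fun p : prod_NormedModule R_AbsRing R_NormedModule R_NormedModule => snd p) t _ (fun p : prod_NormedModule R_AbsRing R_NormedModule R_NormedModule => snd p) H).
  apply filterdiff_linear. apply is_linear_snd.
  intro y. reflexivity.
Qed.

Lemma is_derive_Cmod2 (f : R -> C) t l : is_derive f t l ->
  is_derive (fun s => Cmod (f s) ^ 2) t (2 * (fst (f t) * fst l + snd (f t) * snd l)).
Proof.
  intro H. apply is_derive_ext with (fun s => fst (f s) ^ 2 + snd (f s) ^ 2).
  { intro s. rewrite Cmod_sq. reflexivity. }
  pose proof (is_derive_pow _ 2 _ _ (is_derive_fstC f t l H)) as H1.
  pose proof (is_derive_pow _ 2 _ _ (is_derive_sndC f t l H)) as H2.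
  pose proof (is_derive_plus _ _ _ _ _ H1 H2) as H3.
  replace (2 * (fst (f t) * fst l + snd (f t) * snd l)) with
    (plus (INR 2 * fst l * fst (f t) ^ Init.Nat.pred 2) (INR 2 * snd l * snd (f t) ^ Init.Nat.pred 2)).
  exact H3. unfold plus; simpl. ring.
Qed.

Lemma is_derive_zsR K (g : R -> Z -> R) dg t :
  (forall n, is_derive (fun s => g s n) t (dg n)) -> is_derive (fun s => zsR K (g s)) t (zsR K dg).
Proof.
  intro H. induction K.
  - rewrite zsR_O. apply H.
  - rewrite zsR_S. apply is_derive_ext with (fun s => plus (zsR K (g s)) (plus (g s (Z.of_nat (S K))) (g s (- Z.of_nat (S K))%Z))).
    { intro s. rewrite zsR_S. reflexivity. }
    apply (is_derive_plus (V := R_NormedModule)). apply IHK.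
    apply (is_derive_plus (V := R_NormedModule)); apply H.
Qed.

Lemma zfold_R_eq (g : Z -> R) j : zfold g j = match j with O => g 0%Z | S _ => g (Z.of_nat j) + g (- Z.of_nat j)%Z end.
Proof. destruct j; reflexivity. Qed.

Lemma zfold_nonneg (g : Z -> R) j : (forall a, 0 <= g a) -> 0 <= zfold g j.
Proof. intro H. rewrite zfold_R_eq. destruct j. apply H. pose proof (H (Z.of_nat (S j))). pose proof (H (- Z.of_nat (S j))%Z). lra. Qed.

Lemma zfold_le (g g' : Z -> R) j : (forall a, g a <= g' a) -> zfold g j <= zfold g' j.
Proof. intro H. rewrite !zfold_R_eq. destruct j. apply H. pose proof (H (Z.of_nat (S j))). pose proof (H (- Z.of_nat (S j))%Z). lra. Qed.

Lemma ex_series_zfold_le (g g' : Z -> R) : (forall a, 0 <= g a <= g' a) -> ex_series (zfold g') -> ex_series (zfold g).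
Proof.
  intros H E. apply (ex_series_le (V := R_CompleteNormedModule) _ (zfold g')); auto.
  intro n. unfold norm; simpl. rewrite Rabs_pos_eq. apply zfold_le. intro a; apply H.
  apply zfold_nonneg. intro a; apply H.
Qed.

Lemma ex_series_zfold_lin (g g' : Z -> R) x y : ex_series (zfold g) -> ex_series (zfold g') ->
  ex_series (zfold (fun a => x * g a + y * g' a)).
Proof.
  intros E E'. 
  apply ex_series_ext with (fun n => plus (scal x (zfold g n)) (scal y (zfold g' n))).
  { intro n. rewrite !zfold_R_eq. destruct n; unfold plus, scal; simpl; unfold mult; simpl; ring. }
  apply (ex_series_plus (V := R_NormedModule)); apply (ex_series_scal (V := R_NormedModule)); auto.
Qed.

Lemma Series_zfold_lin (g g' : Z -> R) x y : ex_series (zfold g) -> ex_series (zfold g') ->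
  Series (zfold (fun a => x * g a + y * g' a)) = x * Series (zfold g) + y * Series (zfold g').
Proof.
  intros E E'.
  rewrite (Series_ext _ (fun n => x * zfold g n + y * zfold g' n)).
  2:{ intro n. rewrite !zfold_R_eq. destruct n; ring. }
  rewrite Series_plus. rewrite !Series_scal_l. reflexivity.
  apply ex_series_ext with (fun n => scal x (zfold g n)); [intro; reflexivity|apply (ex_series_scal_l (V := R_NormedModule)); auto].
  apply ex_series_ext with (fun n => scal y (zfold g' n)); [intro; reflexivity|apply (ex_series_scal_l (V := R_NormedModule)); auto].
Qed.

Lemma zsR_lim_Series (g : Z -> R) : ex_series (zfold g) -> is_lim_seq (fun J => zsR J g) (Series (zfold g)).
Proof.
  intro E. apply is_lim_seq_ext with (sum_n (zfold g)). intro; apply sum_zfold_R.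
  apply Series_correct in E. exact E.
Qed.

Lemma zsR_le_Series (g : Z -> R) J : (forall a, 0 <= g a) -> ex_series (zfold g) -> zsR J g <= Series (zfold g).
Proof.
  intros H E. apply (is_lim_seq_incr_compare (fun J => zsR J g)). apply zsR_lim_Series; auto.
  intro n. rewrite zsR_S. pose proof (H (Z.of_nat (S n))). pose proof (H (- Z.of_nat (S n))%Z). lra.
Qed.


Lemma cmod_tri_sq a b : Cmod (Cplus a b) ^ 2 <= 2 * Cmod a ^ 2 + 2 * Cmod b ^ 2.
Proof.
  pose proof (Cmod_triangle a b). pose proof (Cmod_ge_0 a). pose proof (Cmod_ge_0 b). pose proof (Cmod_ge_0 (Cplus a b)).
  assert (Cmod (Cplus a b) ^ 2 <= (Cmod a + Cmod b) ^ 2) by (apply pow_incr; split; lra). assert (E5 : (Cmod a + Cmod b) ^ 2 = 2 * Cmod a ^ 2 + 2 * Cmod b ^ 2 - (Cmod a - Cmod b) ^ 2) by ring. pose proof (pow2_ge_0 (Cmod a - Cmod b)). lra.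
Qed.

Lemma cmod_sub_sq a b : Cmod a ^ 2 <= 2 * Cmod (Cminus a b) ^ 2 + 2 * Cmod b ^ 2.
Proof.
  replace a with (Cplus (Cminus a b) b) at 1 by (apply Ceq; simpl; ring). apply cmod_tri_sq.
Qed.

Lemma cmod_diff_sq a b : Cmod (Cminus a b) ^ 2 <= 2 * Cmod a ^ 2 + 2 * Cmod b ^ 2.
Proof.
  unfold Cminus. pose proof (cmod_tri_sq a (Copp b)). rewrite Cmod_opp in H. exact H.
Qed.

Lemma h2w_nonneg L n : 0 <= h2_weight L n.
Proof. pose proof (h2w_ge L n). lra. Qed.

Lemma h2_ex_csub L f g : ex_series (h2_terms L f) -> ex_series (h2_terms L g) -> ex_series (h2_terms L (csub f g)).
Proof.
  intros Ef Eg. unfold h2_terms.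
  apply ex_series_zfold_le with (fun n => 2 * (h2_weight L n * Cmod (f n) ^ 2) + 2 * (h2_weight L n * Cmod (g n) ^ 2)).
  - intro a. pose proof (h2w_nonneg L a). split. apply Rmult_le_pos; [lra|apply pow2_ge_0].
    unfold csub. pose proof (cmod_diff_sq (f a) (g a)). nra.
  - apply ex_series_zfold_lin; auto.
Qed.

Lemma local_bound L (u : R -> Z -> C) : 0 < L -> (forall t, in_H2per L (u t)) ->
  (forall t eps, 0 < eps -> exists d, 0 < d /\
      forall s, Rabs (s - t) < d -> H2_norm_sq L (csub (u s) (u t)) < eps) ->
  forall t0, exists d, 0 < d /\ exists b, forall s, Rabs (s - t0) < d -> Hb L (u s) b.
Proof.
  intros HL Hin Hc t0. destruct (Hc t0 1 Rlt_0_1) as [d [Hd Hs]]. exists d. split; auto.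
  set (S0 := Series (h2_terms L (u t0))).
  assert (HS0 : 0 <= S0).
  { unfold S0. eapply Rle_trans. apply (zsR_nonneg 0 (fun n => h2_weight L n * Cmod (u t0 n) ^ 2)).
    intro a. apply Rmult_le_pos; [apply h2w_nonneg|apply pow2_ge_0].
    apply zsR_le_Series. intro a. apply Rmult_le_pos; [apply h2w_nonneg|apply pow2_ge_0]. apply Hin. }
  assert (HL' : 0 < / L) by (apply Rinv_0_lt_compat; auto).
  exists (sqrt (2 * S0 + 2 / L)). intros s Hst. split. apply sqrt_pos.
  intro J. rewrite pow2_sqrt by (unfold Rdiv; lra).
  specialize (Hs s Hst). unfold H2_norm_sq in Hs.
  set (D := Series (h2_terms L (csub (u s) (u t0)))) in Hs.
  assert (HD : D < / L).
  { apply (Rmult_lt_reg_l L); auto. rewrite Rinv_r; lra. }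
  eapply Rle_trans. apply (zsR_le J _ (fun n => 2 * (h2_weight L n * Cmod (csub (u s) (u t0) n) ^ 2) + 2 * (h2_weight L n * Cmod (u t0 n) ^ 2))).
  { intros a _. pose proof (h2w_nonneg L a). unfold csub. pose proof (cmod_sub_sq (u s a) (u t0 a)). nra. }
  rewrite zsR_plus, !zsR_scal.
  assert (zsR J (fun n => h2_weight L n * Cmod (csub (u s) (u t0) n) ^ 2) <= D).
  { apply zsR_le_Series. intro a. apply Rmult_le_pos; [apply h2w_nonneg|apply pow2_ge_0].
    apply h2_ex_csub; apply Hin. }
  assert (zsR J (fun n => h2_weight L n * Cmod (u t0 n) ^ 2) <= S0).
  { apply zsR_le_Series. intro a. apply Rmult_le_pos; [apply h2w_nonneg|apply pow2_ge_0]. apply Hin. }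
  unfold Rdiv. lra.
Qed.

Lemma lim_inv_S : is_lim_seq (fun K => / INR (S K)) 0.
Proof.
  replace (Finite 0) with (Rbar_inv p_infty) by reflexivity.
  apply is_lim_seq_inv. 2: discriminate.
  apply (is_lim_seq_incr_1 INR p_infty). apply is_lim_seq_INR.
Qed.

Lemma squeeze_zero (x : nat -> R) e C1 C2 : is_lim_seq x e ->
  (forall K, Rabs (x K) <= C1 * / INR (S K) + C2 * (/ INR (S K) * / INR (S K))) -> @eq R e 0.
Proof.
  intros Hx Hb.
  set (w := fun K => C1 * / INR (S K) + C2 * (/ INR (S K) * / INR (S K))).
  assert (Hw : is_lim_seq w 0).
  { replace 0 with (C1 * 0 + C2 * (0 * 0)) by ring.
    apply is_lim_seq_plus'. apply (is_lim_seq_scal_l _ C1 0). apply lim_inv_S.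
    apply (is_lim_seq_scal_l _ C2 (0 * 0)). apply is_lim_seq_mult'; apply lim_inv_S. }
  assert (Hw' : is_lim_seq (fun K => - w K) 0).
  { replace (Finite 0) with (Rbar_opp 0) by (simpl; f_equal; ring). apply -> is_lim_seq_opp. exact Hw. }
  assert (H0 : is_lim_seq x 0).
  { apply is_lim_seq_le_le with (fun K => - w K) w; auto. intro K. specialize (Hb K).
    unfold w. apply Rabs_le_between in Hb. lra. }
  apply is_lim_seq_unique in Hx. apply is_lim_seq_unique in H0. rewrite Hx in H0. first [injection H0; auto | exact H0 | inversion H0; auto].
Qed.

Definition lder (L delta : R) (c u : Z -> C) (n : Z) : C :=
  Cplus (Cmult (0, - (kappa L * IZR n) / 2) (c n)) (Cmult (0, delta ^ 2 * (kappa L * IZR n) ^ 3) (u n)).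

Lemma D_identity L delta (u c : Z -> C) K : real_coeffs u ->
  zsR K (fun n => 2 * (fst (u n) * fst (lder L delta c u n) + snd (u n) * snd (lder L delta c u n)))
  = kappa L * snd (zsC K (fun n => Cmult (RtoC (IZR n)) (Cmult (u (- n)%Z) (c n)))).
Proof.
  intro Hr. rewrite zsC_snd, <- zsR_scal. apply zsR_ext. intros n _. rewrite Hr. unfold lder. simpl. field.
Qed.

Definition Mb (L b : R) (K : nat) : R :=
  ((b ^ 2 / kappa L ^ 4 + 5) / 2) * (b ^ 2 * Ak L * (2 / INR K) + b ^ 2 * Ak L ^ 2 / INR K ^ 2 * 5).

Lemma Tlim_bound L u c b K : 0 < L -> Hb L u b -> real_coeffs u -> (1 <= K)%nat ->
  (forall n, is_zsum (fun m => Cmult (u m) (u (n - m)%Z)) (c n)) ->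
  Cmod (zsC K (fun n => Cmult (RtoC (IZR n)) (Cmult (u (- n)%Z) (c n)))) <= Mb L b K.
Proof.
  intros HL H Hr HK Hc. apply lim_Cmod_le with (x := fun J => Tsum u K J).
  - unfold Tsum. apply (zsC_lim K (fun J n => Cmult (RtoC (IZR n)) (Cmult (u (- n)%Z) (zsC J (fun m => Cmult (u m) (u (n - m)%Z)))))).
    intro n. apply lim_cmult, lim_cmult, zsum_lim, Hc.
  - exists K. intros J HJ. apply T_total; auto.
Qed.

Lemma snd_le_Cmod z : Rabs (snd z) <= Cmod z.
Proof. eapply Rle_trans; [|apply Rmax_Cmod]. apply Rmax_r. Qed.

Lemma L2_ex L f : in_H2per L f -> ex_series (zfold (fun n => Cmod (f n) ^ 2)).
Proof.
  intros [E _]. apply ex_series_zfold_le with (fun n => h2_weight L n * Cmod (f n) ^ 2); auto.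
  intro a. pose proof (h2w_ge L a). pose proof (pow2_ge_0 (Cmod (f a))). split; nra.
Qed.

Lemma conservation L delta uin u : 0 < L -> kdv_solution L delta uin u ->
  forall t, Series (zfold (fun n => Cmod (u t n) ^ 2)) = Series (zfold (fun n => Cmod (u 0 n) ^ 2)).
Proof.
  intros HL [Hin [Hc [H0 [c [Hconv Hder]]]]].
  set (N := fun s => Series (zfold (fun n => Cmod (u s n) ^ 2))).
  set (Dk := fun K s => zsR K (fun n => 2 * (fst (u s n) * fst (lder L delta (c s) (u s) n) + snd (u s n) * snd (lder L delta (c s) (u s) n)))).
  assert (Hd : forall K s, is_derive (fun s => zsR K (fun n => Cmod (u s n) ^ 2)) s (Dk K s)).
  { intros K s. apply (is_derive_zsR K (fun s n => Cmod (u s n) ^ 2)). intro n.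
    apply is_derive_Cmod2. apply Hder. }
  assert (HD : forall K s b, (1 <= K)%nat -> Hb L (u s) b -> Rabs (Dk K s) <= kappa L * Mb L b K).
  { intros K s b HK Hbs. unfold Dk. rewrite D_identity by (apply Hin).
    pose proof (kappa_pos L HL). rewrite Rabs_mult, Rabs_pos_eq by lra.
    apply Rmult_le_compat_l. lra. eapply Rle_trans. apply snd_le_Cmod.
    apply Tlim_bound; auto. apply Hin. }
  assert (Loc : forall t0, exists d, 0 < d /\ forall s, Rabs (s - t0) < d -> N s = N t0).
  { intro t0. destruct (local_bound L u HL Hin Hc t0) as [d [Hd0 [b Hb0]]].
    exists d. split; auto. intros s Hs.
    apply Rminus_diag_uniq.
    apply (squeeze_zero (fun K => zsR (S K) (fun n => Cmod (u s n) ^ 2) - zsR (S K) (fun n => Cmod (u t0 n) ^ 2))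
       (N s - N t0)
       (kappa L * ((b ^ 2 / kappa L ^ 4 + 5) / 2) * (b ^ 2 * Ak L * 2) * Rabs (s - t0))
       (kappa L * ((b ^ 2 / kappa L ^ 4 + 5) / 2) * (b ^ 2 * Ak L ^ 2 * 5) * Rabs (s - t0))).
    - apply (is_lim_seq_incr_1 (fun K => zsR K (fun n => Cmod (u s n) ^ 2) - zsR K (fun n => Cmod (u t0 n) ^ 2))).
      apply is_lim_seq_minus'; apply zsR_lim_Series; apply L2_ex with L; apply Hin.
    - intro K.
      assert (BV := bounded_variation (fun s => zsR (S K) (fun n => Cmod (u s n) ^ 2)) (Dk (S K))
                 (kappa L * Mb L b (S K)) t0 s).
      eapply Rle_trans. apply BV.
      { intros t' Ht'. split. apply Hd. apply HD. lia. apply Hb0. lra. }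
      assert (HS : 0 < INR (S K)) by (apply lt_0_INR; lia).
      pose proof (kappa_pos L HL). unfold Mb. right. field. repeat split; lra. }
  intro t.
  assert (Hz : forall x, is_derive N x 0).
  { intro x. destruct (Loc x) as [d [Hd0 Hx]].
    apply is_derive_ext_loc with (fun _ => N x).
    - exists (mkposreal d Hd0). intros y Hy. symmetry. apply Hx. exact Hy.
    - exact (is_derive_const (K := R_AbsRing) (V := R_NormedModule) (N x) x). }
  assert (BV := bounded_variation N (fun _ => 0) 0 0 t).
  assert (Rabs (N t - N 0) <= 0 * Rabs (t - 0)).
  { apply BV. intros. split. apply Hz. rewrite Rabs_R0. lra. }
  rewrite Rmult_0_l in H. apply Rminus_diag_uniq. pose proof (Rabs_pos (N t - N 0)).
  assert (Rabs (N t - N 0) = 0) by lra. apply Rabs_eq_0 in H2. exact H2.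
Qed.

Lemma pt_lower (a b : C) lam : 0 < lam ->
  (1 - lam) * Cmod a ^ 2 + (1 - / lam) * Cmod b ^ 2 <= Cmod (Cminus a b) ^ 2.
Proof.
  intro Hl. rewrite !Cmod_sq. simpl.
  assert (E : (fst a + - fst b) ^ 2 + (snd a + - snd b) ^ 2 - ((1 - lam) * (fst a ^ 2 + snd a ^ 2) + (1 - / lam) * (fst b ^ 2 + snd b ^ 2))
    = / lam * ((lam * fst a - fst b) ^ 2 + (lam * snd a - snd b) ^ 2)) by (field; lra).
  assert (0 <= / lam * ((lam * fst a - fst b) ^ 2 + (lam * snd a - snd b) ^ 2)).
  { apply Rmult_le_pos. left; apply Rinv_0_lt_compat; auto. pose proof (pow2_ge_0 (lam * fst a - fst b)). pose proof (pow2_ge_0 (lam * snd a - snd b)). lra. }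
  lra.
Qed.

Lemma series_lower (f g : Z -> C) lam : 0 < lam ->
  ex_series (zfold (fun n => Cmod (f n) ^ 2)) -> ex_series (zfold (fun n => Cmod (g n) ^ 2)) ->
  (1 - lam) * Series (zfold (fun n => Cmod (f n) ^ 2)) + (1 - / lam) * Series (zfold (fun n => Cmod (g n) ^ 2))
  <= Series (zfold (fun n => Cmod (Cminus (f n) (g n)) ^ 2)).
Proof.
  intros Hl Ef Eg. rewrite <- Series_zfold_lin by auto.
  set (h := fun n => (1 - lam) * Cmod (f n) ^ 2 + (1 - / lam) * Cmod (g n) ^ 2).
  set (d := fun n => Cmod (Cminus (f n) (g n)) ^ 2).
  assert (Ed : ex_series (zfold d)).
  { apply ex_series_zfold_le with (fun n => 2 * Cmod (f n) ^ 2 + 2 * Cmod (g n) ^ 2).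
    intro a. unfold d. split. apply pow2_ge_0. apply cmod_diff_sq. apply ex_series_zfold_lin; auto. }
  assert (Eh : ex_series (zfold h)) by (apply ex_series_zfold_lin; auto).
  assert (Edh : ex_series (zfold (fun n => d n - h n))).
  { pose proof (ex_series_zfold_lin d h 1 (-1) Ed Eh) as X.
    refine (ex_series_ext _ _ _ X). intro j. match goal with |- ?a = ?b => change (@eq R a b) end. rewrite !zfold_R_eq. destruct j; ring. }
  assert (E : Series (zfold d) = 1 * Series (zfold (fun n => d n - h n)) + 1 * Series (zfold h)).
  { rewrite <- Series_zfold_lin. apply Series_ext. intro j. rewrite !zfold_R_eq. destruct j; ring.
    - exact Edh.
    - auto. }
  fold d. rewrite E.
  assert (0 <= Series (zfold (fun n => d n - h n))).
  { eapply Rle_trans. apply (zsR_nonneg 0 (fun n => d n - h n)).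
    intro a. unfold d, h. pose proof (pt_lower (f a) (g a) lam Hl). lra.
    apply zsR_le_Series. intro a. unfold d, h. pose proof (pt_lower (f a) (g a) lam Hl). lra.
    exact Edh. }
  fold h. lra.
Qed.

Lemma choose_lam A B : 0 <= A -> 0 <= B -> A <> B -> exists lam, 0 < lam /\ 0 < (1 - lam) * A + (1 - / lam) * B.
Proof.
  intros HA HB HAB.
  destruct (Req_dec A 0) as [->|HA0].
  - exists 2. split. lra. assert (B > 0) by lra. lra.
  - destruct (Req_dec B 0) as [->|HB0].
    + exists (/2). split. lra. rewrite Rinv_inv. lra.
    + assert (sA : 0 < sqrt A) by (apply sqrt_lt_R0; lra).
      assert (sB : 0 < sqrt B) by (apply sqrt_lt_R0; lra).
      exists (sqrt B / sqrt A). split. apply Rdiv_lt_0_compat; auto.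
      assert (E : (1 - sqrt B / sqrt A) * A + (1 - / (sqrt B / sqrt A)) * B = (sqrt A - sqrt B) ^ 2).
      { assert (EA : A = sqrt A * sqrt A) by (rewrite sqrt_sqrt; lra).
        assert (EB : B = sqrt B * sqrt B) by (rewrite sqrt_sqrt; lra).
        remember (sqrt A) as a. remember (sqrt B) as b. rewrite EA, EB. field. lra. }
      rewrite E. apply pow2_gt_0. intro H. apply HAB.
      rewrite <- (sqrt_sqrt A), <- (sqrt_sqrt B) by lra. replace (sqrt A) with (sqrt B) by lra. reflexivity.
Qed.

Lemma cis_mod th : Cmod (cis th) = 1.
Proof. unfold Cmod, cis. simpl fst. simpl snd. rewrite Rplus_comm, <- !Rsqr_pow2, sin2_cos2. apply sqrt_1. Qed.

Lemma cis_add x y : Cmult (cis x) (cis y) = cis (x + y).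
Proof. unfold cis. apply Ceq; simpl; rewrite ?cos_plus, ?sin_plus; ring. Qed.

Lemma cis_neg x : cis (- x) = Cconj (cis x).
Proof. unfold cis, Cconj. simpl. rewrite cos_neg, sin_neg. reflexivity. Qed.

Lemma Cmod_translate L a f n : Cmod (translate L a f n) = Cmod (f n).
Proof. unfold translate. rewrite Cmod_mult, cis_mod. ring. Qed.

Lemma h2_terms_eq L f g : (forall n, Cmod (f n) = Cmod (g n)) -> forall j, h2_terms L f j = h2_terms L g j.
Proof. intros H j. unfold h2_terms. rewrite !zfold_R_eq. destruct j; rewrite ?H; reflexivity. Qed.

Lemma translate_H2 L a f : in_H2per L f -> in_H2per L (translate L a f).
Proof.
  intros [E Hr]. split.
  - refine (ex_series_ext _ _ _ E). intro j. symmetry. apply h2_terms_eq. intro; apply Cmod_translate.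
  - intro n. unfold translate. rewrite Hr. rewrite opp_IZR.
    replace (kappa L * - IZR n * a) with (- (kappa L * IZR n * a)) by ring. rewrite cis_neg.
    apply Ceq; unfold Cconj; simpl; ring.
Qed.

Lemma prod_norm_Cmod (z : C) : @norm R_AbsRing (prod_NormedModule R_AbsRing R_NormedModule R_NormedModule) z = Cmod z.
Proof.
  unfold norm; simpl. unfold prod_norm, Cmod. simpl. unfold norm; simpl. unfold abs; simpl.
  f_equal. rewrite !Rmult_1_r, <- !Rsqr_def, <- !Rsqr_abs. reflexivity.
Qed.

Lemma is_linear_Cmult (k : C) :
  is_linear (U := prod_NormedModule R_AbsRing R_NormedModule R_NormedModule)
            (V := prod_NormedModule R_AbsRing R_NormedModule R_NormedModule) (fun z => Cmult k z).
Proof.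
  split.
  - intros x y. apply Ceq; simpl; unfold plus; simpl; unfold prod_plus, plus; simpl; ring.
  - intros r x. apply Ceq; simpl; unfold scal; simpl; unfold prod_scal, scal; simpl; unfold mult; simpl; ring.
  - exists (Cmod k + 1). split. pose proof (Cmod_ge_0 k). lra.
    intro x. rewrite !prod_norm_Cmod. rewrite Cmod_mult. pose proof (Cmod_ge_0 x). nra.
Qed.

Lemma is_derive_Cmult (f : R -> C) t l k : is_derive f t l -> is_derive (fun s => Cmult k (f s)) t (Cmult k l).
Proof.
  intro H. unfold is_derive in *.
  eapply filterdiff_ext_lin.
  apply (filterdiff_comp' f (fun z => Cmult k z) t _ (fun z => Cmult k z) H).
  apply filterdiff_linear. apply is_linear_Cmult.
  intro y. apply Ceq; simpl; unfold scal; simpl; unfold prod_scal, scal; simpl; unfold mult; simpl; ring.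
Qed.

Lemma conv_translate L a f n m :
  Cmult (translate L a f m) (translate L a f (n - m)%Z) =
  Cmult (cis (kappa L * IZR n * a)) (Cmult (f m) (f (n - m)%Z)).
Proof.
  unfold translate. rewrite minus_IZR.
  replace (kappa L * IZR n * a) with (kappa L * IZR m * a + kappa L * (IZR n - IZR m) * a) by ring.
  rewrite <- cis_add. apply Ceq; simpl; ring.
Qed.

Lemma translate_solution L delta a uin u : kdv_solution L delta uin u ->
  kdv_solution L delta (translate L a uin) (fun t => translate L a (u t)).
Proof.
  intros [Hin [Hc [H0 [c [Hconv Hder]]]]].
  split. intro t; apply translate_H2; auto.
  split.
  { intros t eps Heps. destruct (Hc t eps Heps) as [d [Hd Hs]]. exists d; split; auto. intros s Hst.
    unfold H2_norm_sq. rewrite (Series_ext _ (h2_terms L (csub (u s) (u t)))). apply Hs; auto.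
    intro j. apply h2_terms_eq. intro n. unfold csub, translate.
    replace (Cminus (Cmult (cis (kappa L * IZR n * a)) (u s n)) (Cmult (cis (kappa L * IZR n * a)) (u t n)))
      with (Cmult (cis (kappa L * IZR n * a)) (Cminus (u s n) (u t n))) by (apply Ceq; simpl; ring).
    rewrite Cmod_mult, cis_mod. ring. }
  split. rewrite H0; reflexivity.
  exists (fun t n => Cmult (cis (kappa L * IZR n * a)) (c t n)). split.
  - intros t n. unfold is_zsum.
    apply is_series_ext with (fun j => scal (cis (kappa L * IZR n * a)) (zfold (fun m => Cmult (u t m) (u t (n - m)%Z)) j)).
    { intro j. destruct j; unfold zfold.
      - rewrite conv_translate. reflexivity.
      - rewrite !conv_translate. apply Ceq; simpl; ring. }
    exact (is_series_scal (K := C_AbsRing) (V := C_NormedModule) _ _ _ (Hconv t n)).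
  - intros t n. unfold translate.
    set (k := cis (kappa L * IZR n * a)).
    pose proof (is_derive_Cmult (fun s => u s n) t _ k (Hder t n)) as D.
    match goal with |- is_derive _ _ ?l =>
      let E := fresh in
      assert (E : l = Cmult k (Cplus (Cmult (0, - (kappa L * IZR n) / 2) (c t n)) (Cmult (0, delta ^ 2 * (kappa L * IZR n) ^ 3) (u t n))))
        by (apply Ceq; simpl; ring); rewrite E end.
    exact D.
Qed.

Lemma const_of_deriv0 (g dg : R -> R) : (forall s, is_derive g s (dg s)) -> (forall s, dg s = 0) -> forall t, g t = g 0.
Proof.
  intros H H0 t. assert (BV := bounded_variation g dg 0 0 t).
  assert (Rabs (g t - g 0) <= 0 * Rabs (t - 0)).
  { apply BV. intros. split. apply H. rewrite H0, Rabs_R0. lra. }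
  rewrite Rmult_0_l in H1. pose proof (Rabs_pos (g t - g 0)).
  assert (Rabs (g t - g 0) = 0) by lra. apply Rabs_eq_0 in H3. lra.
Qed.

Lemma mode0 L delta uin u : kdv_solution L delta uin u -> uin 0%Z = RtoC 0 -> forall t, u t 0%Z = RtoC 0.
Proof.
  intros [Hin [Hc [H0 [c [Hconv Hder]]]]] Hu0 t.
  set (l := fun s => Cplus (Cmult (0, - (kappa L * IZR 0) / 2) (c s 0%Z)) (Cmult (0, delta ^ 2 * (kappa L * IZR 0) ^ 3) (u s 0%Z))).
  assert (D1 : forall s, is_derive (fun s => fst (u s 0%Z)) s (fst (l s))) by (intro s; apply is_derive_fstC, Hder).
  assert (D2 : forall s, is_derive (fun s => snd (u s 0%Z)) s (snd (l s))) by (intro s; apply is_derive_sndC, Hder).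
  assert (Z1 : forall s, fst (l s) = 0) by (intro s; unfold l, Cplus, Cmult; cbn [fst snd]; field).

  assert (Z2 : forall s, snd (l s) = 0) by (intro s; unfold l, Cplus, Cmult; cbn [fst snd]; field).
  pose proof (const_of_deriv0 _ _ D1 Z1 t) as E1. pose proof (const_of_deriv0 _ _ D2 Z2 t) as E2.
  simpl in E1, E2. rewrite H0, Hu0 in E1, E2. apply Ceq; auto.
Qed.

Lemma cis_ne_1 L (k n : Z) : 0 < L -> k <> 0%Z -> n <> 0%Z -> (Z.abs n < Z.abs k)%Z ->
  cis (kappa L * IZR n * (L / IZR k)) <> RtoC 1.
Proof.
  intros HL Hk Hn Hnk E.
  assert (Hk' : IZR k <> 0) by (apply not_0_IZR; auto).
  set (th := kappa L * IZR n * (L / IZR k)).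
  assert (Eth : th = 2 * (PI * IZR n / IZR k)) by (unfold th, kappa; field; split; lra).
  assert (C1 : cos th = 1) by (apply (f_equal fst) in E; exact E).
  rewrite Eth, cos_2a_sin in C1.
  assert (S0 : sin (PI * IZR n / IZR k) = 0) by nra.
  apply sin_eq_0_0 in S0. destruct S0 as [j Hj].
  assert (Hj' : IZR n = IZR j * IZR k).
  { pose proof PI_RGT_0. apply (Rmult_eq_reg_l PI); [|lra].
    apply (Rmult_eq_reg_r (/ IZR k)). 2: apply Rinv_neq_0_compat; auto.
    replace (PI * IZR n * / IZR k) with (PI * IZR n / IZR k) by reflexivity. rewrite Hj. field. auto. }
  rewrite <- mult_IZR in Hj'. apply eq_IZR in Hj'. subst n.
  rewrite Z.abs_mul in Hnk. destruct (Z.eq_dec j 0). subst; lia. nia.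
Qed.

Lemma zero_of_translate L (k n : Z) f : 0 < L -> k <> 0%Z -> n <> 0%Z -> (Z.abs n < Z.abs k)%Z ->
  translate L (L / IZR k) f n = f n -> f n = RtoC 0.
Proof.
  intros HL Hk Hn Hnk E. unfold translate in E.
  pose proof (cis_ne_1 L k n HL Hk Hn Hnk) as Hc.
  set (z := cis (kappa L * IZR n * (L / IZR k))) in *.
  assert (Hz : Cminus z (RtoC 1) <> RtoC 0).
  { intro H. apply Hc. pose proof (f_equal fst H) as H1. pose proof (f_equal snd H) as H2.
    simpl in H1, H2. apply Ceq; simpl; lra. }
  assert (E2 : Cmult (Cminus z (RtoC 1)) (f n) = RtoC 0) .
  { transitivity (Cminus (Cmult z (f n)) (f n)). apply Ceq; simpl; ring. rewrite E. apply Ceq; simpl; ring. }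
  replace (f n) with (Cmult (Cinv (Cminus z (RtoC 1))) (Cmult (Cminus z (RtoC 1)) (f n))).
  rewrite E2. apply Ceq; simpl; ring.
  rewrite Cmult_assoc, Cinv_l; auto. apply Cmult_1_l.
Qed.

Lemma L2sq_nonneg L f : in_H2per L f -> 0 <= Series (zfold (fun n => Cmod (f n) ^ 2)).
Proof.
  intro H. eapply Rle_trans. apply (zsR_nonneg 0 (fun n => Cmod (f n) ^ 2)). intro; apply pow2_ge_0.
  apply zsR_le_Series. intro; apply pow2_ge_0. apply L2_ex with L; auto.
Qed.

Lemma inv_sol L delta k uin u : kdv_unique L delta -> kdv_solution L delta uin u ->
  translate L (L / IZR k) uin = uin -> forall t, translate L (L / IZR k) (u t) = u t.
Proof.
  intros Hu S T t. pose proof (translate_solution L delta (L / IZR k) uin u S) as S'.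
  rewrite T in S'. pose proof (Hu _ _ _ S' S) as E.
  apply (f_equal (fun F => F t)) in E. exact E.
Qed.

Lemma low_mode_zero L delta k uin u t n : 0 < L -> (k <> 0)%Z -> kdv_unique L delta -> kdv_solution L delta uin u ->
  translate L (L / IZR k) uin = uin -> uin 0%Z = RtoC 0 -> (Z.abs n < Z.abs k)%Z -> u t n = RtoC 0.
Proof.
  intros HL Hk Hu S T H0 Hn. destruct (Z.eq_dec n 0) as [->|Hn0].
  - apply (mode0 L delta uin u S H0).
  - apply (zero_of_translate L k n (u t) HL Hk Hn0 Hn).
    pose proof (inv_sol L delta k uin u Hu S T t) as E. rewrite E. reflexivity.
Qed.

Theorem proposition3p5 (L delta : R) (k : Z)
  (uin1 uin2 : Z -> C) (u1 u2 : R -> Z -> C) :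
  0 < L -> k <> 0%Z ->
  kdv_unique L delta ->
  in_H2per L uin1 -> in_H2per L uin2 ->
  uin1 0%Z = RtoC 0 -> uin2 0%Z = RtoC 0 ->
  translate L (L / IZR k) uin1 = uin1 ->
  translate L (L / IZR k) uin2 = uin2 ->
  L2_norm L uin1 <> L2_norm L uin2 ->
  kdv_solution L delta uin1 u1 ->
  kdv_solution L delta uin2 u2 ->
  (forall t : R, translate L (L / IZR k) (u1 t) = u1 t /\
                 translate L (L / IZR k) (u2 t) = u2 t) /\
  (forall (M : nat) (t : R), (0 < M)%nat -> (Z.of_nat M < Z.abs k)%Z ->
       PM M (u1 t) = PM M (u2 t)) /\
  (exists eps : R, 0 < eps /\
     forall T : R, exists t : R, T <= t /\
       eps < L2_norm L (csub (u1 t) (u2 t))).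
Proof.
  intros HL Hk Hu H1 H2 H10 H20 T1 T2 Hneq S1 S2.
  split; [|split].
  - intro t. split; eapply inv_sol; eauto.
  - intros M t HM HMk. apply functional_extensionality. intro n. unfold PM.
    destruct (Z.leb_spec (Z.abs n) (Z.of_nat M)); [|reflexivity].
    rewrite (low_mode_zero L delta k uin1 u1 t n), (low_mode_zero L delta k uin2 u2 t n); auto; lia.
  - set (A := Series (zfold (fun n => Cmod (uin1 n) ^ 2))).
    set (B := Series (zfold (fun n => Cmod (uin2 n) ^ 2))).
    assert (HA : 0 <= A) by (apply L2sq_nonneg with L; auto).
    assert (HB : 0 <= B) by (apply L2sq_nonneg with L; auto).
    assert (HAB : A <> B) by (intro E; apply Hneq; unfold L2_norm; fold A B; rewrite E; reflexivity).
    destruct (choose_lam A B HA HB HAB) as [lam [Hl Hpos]].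
    set (d0 := (1 - lam) * A + (1 - / lam) * B) in *.
    assert (Hs : 0 < sqrt (L * d0)) by (apply sqrt_lt_R0; nra).
    exists (sqrt (L * d0) / 2). split. lra.
    intro T. exists T. split. lra.
    destruct S1 as [Hin1 S1']. destruct S2 as [Hin2 S2'].
    assert (C1 := conservation L delta uin1 u1 HL (conj Hin1 S1') T).
    assert (C2 := conservation L delta uin2 u2 HL (conj Hin2 S2') T).
    destruct S1' as [_ [E1 _]]. destruct S2' as [_ [E2 _]].
    rewrite E1 in C1. rewrite E2 in C2. fold A in C1. fold B in C2.
    pose proof (series_lower (u1 T) (u2 T) lam Hl (L2_ex L _ (Hin1 T)) (L2_ex L _ (Hin2 T))) as SL.
    rewrite C1, C2 in SL. fold d0 in SL.
    unfold L2_norm, csub.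
    assert (sqrt (L * d0) <= sqrt (L * Series (zfold (fun n => Cmod (Cminus (u1 T n) (u2 T n)) ^ 2)))).
    { apply sqrt_le_1_alt. apply Rmult_le_compat_l; lra. }
    lra.
Qed.
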